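(* Let $A$ be an $M\times N$ matrix whose columns form a frame for $\mathcal{H}_M$ and let $c$ be a nonzero scalar. Then the columns of the $2M\times 2N$ matrix $$B=\begin{bmatrix}cA & cA\\ cA & -cA\end{bmatrix}$$ form a frame for $\mathcal{H}_{2M}$. Moreover, $B$ represents a tight frame if $A$ does, and $B$ represents an equal norm frame if $A$ does.
   Context: $\mathcal{H}_M$ denotes an $M$-dimensional Hilbert space, identified with $\mathbb{R}^M$ (or $\mathbb{C}^M$) via a fixed orthonormal basis. A family $\{f_i\}_{i=1}^N$ is a frame if there are $0<A\le B<\infty$ with $A\|f\|^2\le\sum_i|\langle f,f_i\rangle|^2\le B\|f\|^2$ for all $f$; tight if one can take $A=B$; equal norm if all $\|f_i\|$ are equal. A matrix represents a frame if its columns form one. *)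

(* Defs.v *)
From HB Require Import structures.
From mathcomp Require Import all_boot all_order all_algebra.
Set Implicit Arguments. Unset Strict Implicit. Unset Printing Implicit Defensive.
Import Order.TTheory GRing.Theory Num.Theory.
Local Open Scope ring_scope.

(* H_M is identified with R^M (real case, cj = id) or C^M (complex case,
   cj = complex conjugation) via a fixed orthonormal basis. *)

Definition ip (R : numDomainType) (cj : R -> R) (M : nat) (f g : 'cV[R]_M) : R :=
  \sum_(j < M) f j 0 * cj (g j 0).

Definition normsq (R : numDomainType) (M : nat) (f : 'cV[R]_M) : R :=
  \sum_(j < M) `|f j 0| ^+ 2.

Definition frame_sum (R : numDomainType) (cj : R -> R) (M N : nat)
  (F : 'M[R]_(M, N)) (f : 'cV[R]_M) : R :=
  \sum_(i < N) `|ip cj f (col i F)| ^+ 2.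

Definition is_frame (R : numDomainType) (cj : R -> R) (M N : nat)
  (F : 'M[R]_(M, N)) : Prop :=
  exists A B : R, 0 < A /\ A <= B /\
    forall f : 'cV[R]_M,
      A * normsq f <= frame_sum cj F f /\ frame_sum cj F f <= B * normsq f.

Definition is_tight_frame (R : numDomainType) (cj : R -> R) (M N : nat)
  (F : 'M[R]_(M, N)) : Prop :=
  exists A : R, 0 < A /\
    forall f : 'cV[R]_M,
      A * normsq f <= frame_sum cj F f /\ frame_sum cj F f <= A * normsq f.

Definition is_equal_norm_frame (R : numDomainType) (cj : R -> R) (M N : nat)
  (F : 'M[R]_(M, N)) : Prop :=
  is_frame cj F /\ forall i j : 'I_N, normsq (col i F) = normsq (col j F).

Definition dbl_mx (R : numDomainType) (M N : nat) (c : R) (A : 'M[R]_(M, N))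
  : 'M[R]_(M + M, N + N) :=
  block_mx (c *: A) (c *: A) (c *: A) (- (c *: A)).

Definition prop33 (R : numDomainType) (cj : R -> R) : Prop :=
  forall (M N : nat) (A : 'M[R]_(M, N)) (c : R),
    is_frame cj A -> c != 0 ->
    is_frame cj (dbl_mx c A)
    /\ (is_tight_frame cj A -> is_tight_frame cj (dbl_mx c A))
    /\ (is_equal_norm_frame cj A -> is_equal_norm_frame cj (dbl_mx c A)).

(* Main.v *)
Require Import Defs.
From HB Require Import structures.
From mathcomp Require Import all_boot all_order all_algebra.
From mathcomp Require Import ring lra.
Import Order.TTheory GRing.Theory Num.Theory.
Local Open Scope ring_scope.

Section G.
Variables (R : numDomainType) (cj : R -> R).
Hypothesis Hadd : forall x y, cj (x + y) = cj x + cj y.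
Hypothesis Hmul : forall x y, cj (x * y) = cj x * cj y.
Hypothesis Hinv : forall x, cj (cj x) = x.
Hypothesis Hnorm : forall x, `|x| ^+ 2 = x * cj x.

Lemma Hopp x : cj (- x) = - cj x.
Proof.
have h : cj 0 + cj 0 = cj 0 + 0 by rewrite -Hadd !addr0.
have h0 := addrI _ h.
by apply: (addrI (cj x)); rewrite -Hadd !subrr h0.
Qed.

Lemma ip_lft M N (A : 'M[R]_(M, N)) c (u v : 'cV_M) i :
  ip cj (col_mx u v) (col (lshift N i) (dbl_mx c A)) = cj c * ip cj (u + v) (col i A).
Proof.
rewrite /ip big_split_ord /= mulr_sumr -big_split /=; apply: eq_bigr => j _.
rewrite !mxE !(unsplitK (inl _), unsplitK (inr _)) /= !mxE !(unsplitK (inl _), unsplitK (inr _)) /= ?mxE !Hmul; ring.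
Qed.

Lemma ip_rgt M N (A : 'M[R]_(M, N)) c (u v : 'cV_M) i :
  ip cj (col_mx u v) (col (rshift N i) (dbl_mx c A)) = cj c * ip cj (u - v) (col i A).
Proof.
rewrite /ip big_split_ord /= mulr_sumr -big_split /=; apply: eq_bigr => j _.
rewrite !mxE !(unsplitK (inl _), unsplitK (inr _)) /= !mxE !(unsplitK (inl _), unsplitK (inr _)) /= ?mxE ?Hopp !Hmul; ring.
Qed.

Lemma normcj x : `|cj x| ^+ 2 = `|x| ^+ 2.
Proof. by rewrite !Hnorm Hinv mulrC. Qed.

Lemma fs_dbl M N (A : 'M[R]_(M, N)) c (u v : 'cV_M) :
  frame_sum cj (dbl_mx c A) (col_mx u v) =
  `|c| ^+ 2 * (frame_sum cj A (u + v) + frame_sum cj A (u - v)).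
Proof.
rewrite /frame_sum big_split_ord /= mulrDr !mulr_sumr; congr (_ + _); apply: eq_bigr => i _.
  by rewrite ip_lft normrM exprMn normcj.
by rewrite ip_rgt normrM exprMn normcj.
Qed.

Lemma ns_col M (u v : 'cV[R]_M) : normsq (col_mx u v) = normsq u + normsq v.
Proof. by rewrite /normsq big_split_ord /=; congr (_ + _); apply: eq_bigr => j _; rewrite ?col_mxEu ?col_mxEd. Qed.

Lemma ns_par M (u v : 'cV[R]_M) : normsq (u + v) + normsq (u - v) = 2 * (normsq u + normsq v).
Proof.
rewrite /normsq -big_split mulrDr !mulr_sumr -big_split /=; apply: eq_bigr => j _.
rewrite !mxE !Hnorm Hadd Hadd !Hopp; ring.
Qed.

Lemma ns_ge0 M (u : 'cV[R]_M) : 0 <= normsq u.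
Proof. by apply: sumr_ge0 => j _; rewrite exprn_ge0. Qed.

Lemma ns_col_dbl M N (A : 'M[R]_(M, N)) c k : exists i,
  normsq (col k (dbl_mx c A)) = 2 * `|c| ^+ 2 * normsq (col i A).
Proof.
rewrite -(splitK k); case: (split k) => i; exists i => /=;
rewrite /normsq big_split_ord /= mulr_sumr -big_split /=; apply: eq_bigr => j _;
rewrite !mxE !(unsplitK (inl _), unsplitK (inr _)) /= !mxE !(unsplitK (inl _), unsplitK (inr _)) /= ?mxE ?normrN normrM exprMn; ring.
Qed.

Lemma main : prop33 cj.
Proof.
move=> M N A c [a [b [a0 [ab Hf]]]] c0.
have cp : 0 < `|c| ^+ 2 by rewrite exprn_gt0 // normr_gt0.
have p2 : 0 < 2 * `|c| ^+ 2 by apply: mulr_gt0.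
have key : forall a b, (forall f, a * normsq f <= frame_sum cj A f /\ frame_sum cj A f <= b * normsq f) ->
   forall f, (2 * `|c| ^+ 2 * a) * normsq f <= frame_sum cj (dbl_mx c A) f /\
             frame_sum cj (dbl_mx c A) f <= (2 * `|c| ^+ 2 * b) * normsq f.
  move=> a' b' H f; rewrite -[f]vsubmxK fs_dbl ns_col.
  set u := usubmx f; set v := dsubmx f.
  have [h1 h2] := H (u + v); have [h3 h4] := H (u - v).
  have e : forall x, 2 * `|c| ^+ 2 * x * (normsq u + normsq v) = `|c| ^+ 2 * (x * (normsq (u + v) + normsq (u - v))).
    by move=> x; rewrite ns_par; ring.
  rewrite !e; split; rewrite ler_pM2l //; rewrite mulrDr; exact: lerD.
have fr : is_frame cj (dbl_mx c A).
  exists (2 * `|c| ^+ 2 * a), (2 * `|c| ^+ 2 * b); split; first exact: mulr_gt0.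
  by split; [rewrite ler_pM2l | exact: key].
split=> //; split.
  move=> [t [t0 Ht]]; exists (2 * `|c| ^+ 2 * t); split; [exact: mulr_gt0 | exact: key].
move=> [_ He]; split=> // k l.
have [i ->] := @ns_col_dbl _ _ A c k; have [j ->] := @ns_col_dbl _ _ A c l.
by rewrite (He i j).
Qed.
End G.

Theorem proposition3p3 :
  (forall R : realFieldType, prop33 (R := R) id)
  /\ (forall C : numClosedFieldType, prop33 (R := C) (fun z => z^*)).
Proof.
split.
  move=> R; apply: main => // x; by rewrite real_normK ?num_real.
move=> C; apply: main => [x y|x y|x|x] /=.
- by rewrite rmorphD.
- by rewrite rmorphM.
- by rewrite conjCK.
- by rewrite normCK.
Qed.
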